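(* Let $k\ge1$ be an integer, let $V,E,V_*$ be groups, and let $f,g:E\to V$ and $h_i:V\to V_*$ ($i\in\mathbb{Z}/k$) be injective homomorphisms. Let $H=\langle V,t\mid t^{-1}f(e)t=g(e)\ (e\in E)\rangle$ be the HNN-extension, and let $\rho:H\to\mathbb{Z}/k$ be the homomorphism with $\rho(V)=0$ and $\rho(t)=1$, with kernel $K$. Let $\Pi_k$ be the fundamental group of the graph of groups on the directed $k$-cycle with vertices $i\in\mathbb{Z}/k$ and edges $(i,i+1)$, with vertex groups $V_i$ copies of $V$, edge groups $E_i$ copies of $E$, and attaching maps $f_i:E_i\to V_i$, $g_i:E_i\to V_{i+1}$ copies of $f,g$. Let $G_*$ be the group obtained from the free product of $V_*$ with free generators $t_i$ ($i\in\mathbb{Z}/k$) by imposing the relations $t_i^{-1}h_i(f(e))t_i=h_{i+1}(g(e))$ for all $i\in\mathbb{Z}/k$, $e\in E$ (the fundamental group of the graph of groups on the $k$-leaved rose with vertex group $V_*$, edge groups $E_i$ and attaching maps $h_i\circ f_i$, $h_{i+1}\circ g_i$). Then $K\cong\Pi_k$, and $K$ embeds in $G_*$.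
   Context: For a graph of groups with underlying connected directed graph, vertex groups $G_v$, edge groups $G_e$ and injective attaching maps $\iota_e:G_e\to G_{\iota(e)}$, $\tau_e:G_e\to G_{\tau(e)}$, its fundamental group (relative to a spanning tree $T$) is the free product of the $G_v$ and infinite cyclic groups $\langle t_e\rangle$ for edges $e\notin T$, modulo $\iota_e(x)=\tau_e(x)$ for $e\in T$ and $t_e^{-1}\iota_e(x)t_e=\tau_e(x)$ for $e\notin T$, $x\in G_e$; its isomorphism type is independent of $T$. *)

(* Defs.v *)
(* Abstract (possibly infinite) groups are encoded by an explicit record. *)
From HB Require Import structures.
From mathcomp Require Import all_boot all_algebra.
Set Implicit Arguments. Unset Strict Implicit. Unset Printing Implicit Defensive.

Record Grp := {
  gcar :> Type;
  gmul : gcar -> gcar -> gcar;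
  gone : gcar;
  ginv : gcar -> gcar;
  gmulA : forall x y z, gmul x (gmul y z) = gmul (gmul x y) z;
  gmul1 : forall x, gmul gone x = x;
  gmulV : forall x, gmul (ginv x) x = gone
}.
Arguments gmul {g}. Arguments gone {g}. Arguments ginv {g}.

Definition is_hom (A B : Grp) (f : A -> B) : Prop :=
  forall x y, f (gmul x y) = gmul (f x) (f y).

Definition gconj (G : Grp) (x t : G) : G := gmul (gmul (ginv t) x) t.

(* Z/k for k = n.+1, as the additive group of 'I_n.+1 *)
Definition Zk (n : nat) : Grp :=
  @Build_Grp 'I_n.+1 (fun x y => (x + y)%R) 0%R (fun x => (- x)%R)
    (fun x y z => GRing.addrA x y z) (fun x => GRing.add0r x)
    (fun x => GRing.addNr x).

Definition succ (n : nat) (i : 'I_n.+1) : 'I_n.+1 := (i + Zp1)%R.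

(* H is the HNN extension <V, t | t^-1 f(e) t = g(e)>, given by its
   universal property (it is the presentation group, up to unique iso). *)
Definition is_HNN (V E H : Grp) (f g : E -> V) (iV : V -> H) (t : H) : Prop :=
  is_hom iV /\
  (forall e, gconj (iV (f e)) t = iV (g e)) /\
  forall (X : Grp) (phi : V -> X) (s : X),
    is_hom phi -> (forall e, gconj (phi (f e)) s = phi (g e)) ->
    exists psi : H -> X,
      [/\ is_hom psi, (forall v, psi (iV v) = phi v), psi t = s &
        forall psi' : H -> X, is_hom psi' -> (forall v, psi' (iV v) = phi v) ->
          psi' t = s -> forall x, psi' x = psi x].

(* Pi is the fundamental group of the graph of groups on the directed cycle
   with vertices i in Z/k, edges (i,i+1), vertex groups V, edge groups E,
   attaching maps f (into V_i) and g (into V_{i+1}); computed w.r.t. the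
   spanning tree consisting of all edges (i,i+1) with i <> k-1, the edge
   (k-1,0) carrying the stable letter t. *)
Definition is_cycle_pi1 (n : nat) (V E P : Grp) (f g : E -> V)
    (iV : 'I_n.+1 -> V -> P) (t : P) : Prop :=
  (forall i, is_hom (iV i)) /\
  (forall (i : 'I_n.+1) e, i != ord_max -> iV i (f e) = iV (succ i) (g e)) /\
  (forall e, gconj (iV ord_max (f e)) t = iV (succ ord_max) (g e)) /\
  forall (X : Grp) (phi : 'I_n.+1 -> V -> X) (s : X),
    (forall i, is_hom (phi i)) ->
    (forall (i : 'I_n.+1) e, i != ord_max -> phi i (f e) = phi (succ i) (g e)) ->
    (forall e, gconj (phi ord_max (f e)) s = phi (succ ord_max) (g e)) ->
    exists psi : P -> X,
      [/\ is_hom psi, (forall i v, psi (iV i v) = phi i v), psi t = s &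
        forall psi' : P -> X, is_hom psi' -> (forall i v, psi' (iV i v) = phi i v) ->
          psi' t = s -> forall x, psi' x = psi x].

(* G is (V_* * F(t_i : i in Z/k)) / << t_i^-1 h_i(f e) t_i = h_{i+1}(g e) >>,
   given by its universal property. *)
Definition is_rose_pi1 (n : nat) (V E W G : Grp) (f g : E -> V)
    (h : 'I_n.+1 -> V -> W) (iW : W -> G) (t : 'I_n.+1 -> G) : Prop :=
  is_hom iW /\
  (forall i e, gconj (iW (h i (f e))) (t i) = iW (h (succ i) (g e))) /\
  forall (X : Grp) (phi : W -> X) (s : 'I_n.+1 -> X),
    is_hom phi ->
    (forall i e, gconj (phi (h i (f e))) (s i) = phi (h (succ i) (g e))) ->
    exists psi : G -> X,
      [/\ is_hom psi, (forall w, psi (iW w) = phi w), (forall i, psi (t i) = s i) &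
        forall psi' : G -> X, is_hom psi' -> (forall w, psi' (iW w) = phi w) ->
          (forall i, psi' (t i) = s i) -> forall x, psi' x = psi x].

(* Main.v *)
From Stdlib Require Import ClassicalEpsilon FunctionalExtensionality PropExtensionality ProofIrrelevance.
Require Import Defs.
From HB Require Import structures.
From mathcomp Require Import all_boot all_algebra.
Set Implicit Arguments. Unset Strict Implicit. Unset Printing Implicit Defensive.

Section GrpLemmas.
Variable X : Grp.
Implicit Types x y z : X.
Local Notation "x * y" := (gmul x y).
Local Notation "1" := (@gone X).
Local Notation "x ^-1" := (ginv x).

Lemma mulgA' x y z : x * (y * z) = x * y * z. Proof. exact: gmulA. Qed.
Lemma mul1g' x : 1 * x = x. Proof. exact: gmul1. Qed.
Lemma mulVg' x : x^-1 * x = 1. Proof. exact: gmulV. Qed.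
Lemma mulKg' x y : x^-1 * (x * y) = y.
Proof. by rewrite mulgA' mulVg' mul1g'. Qed.
Lemma mulg_cancl x y z : x * y = x * z -> y = z.
Proof. by move=> e; rewrite -(mulKg' x y) e mulKg'. Qed.
Lemma mulgV' x : x * x^-1 = 1.
Proof.
rewrite -[x * x^-1]mul1g' -(mulVg' (x^-1)) -mulgA' (mulgA' (x^-1)) mulVg' mul1g'.
by rewrite mulVg'.
Qed.
Lemma mulg1' x : x * 1 = x.
Proof. by rewrite -(mulVg' x) mulgA' mulgV' mul1g'. Qed.
Lemma mulKVg' x y : x * (x^-1 * y) = y.
Proof. by rewrite mulgA' mulgV' mul1g'. Qed.
Lemma mulgK' x y : y * x * x^-1 = y.
Proof. by rewrite -mulgA' mulgV' mulg1'. Qed.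
Lemma mulgKV' x y : y * x^-1 * x = y.
Proof. by rewrite -mulgA' mulVg' mulg1'. Qed.
Lemma mulg_cancr x y z : y * x = z * x -> y = z.
Proof. by move=> e; rewrite -(mulgK' x y) e mulgK'. Qed.
Lemma invg_uniq x y : x * y = 1 -> y = x^-1.
Proof. by move=> e; apply: (@mulg_cancl x); rewrite e mulgV'. Qed.
Lemma invgK' x : (x^-1)^-1 = x.
Proof. by symmetry; apply: invg_uniq; rewrite mulVg'. Qed.
Lemma invMg' x y : (x * y)^-1 = y^-1 * x^-1.
Proof. by symmetry; apply: invg_uniq; rewrite -mulgA' (mulgA' y) mulgV' mul1g' mulgV'. Qed.
Lemma invg1' : (1 : X)^-1 = 1.
Proof. by symmetry; apply: invg_uniq; rewrite mulg1'. Qed.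
Lemma invg_inj x y : x^-1 = y^-1 -> x = y.
Proof. by move=> e; rewrite -(invgK' x) e invgK'. Qed.
End GrpLemmas.

Section HomLemmas.
Variables (X Y : Grp) (f : X -> Y) (Hf : is_hom f).
Lemma hom1 : f gone = gone.
Proof. apply: (@mulg_cancl _ (f gone)); by rewrite -Hf !mulg1'. Qed.
Lemma homV x : f (ginv x) = ginv (f x).
Proof. by apply: invg_uniq; rewrite -Hf mulgV' hom1. Qed.
End HomLemmas.

Lemma is_hom_comp (X Y Z : Grp) (f : X -> Y) (g : Y -> Z) :
  is_hom f -> is_hom g -> is_hom (fun x => g (f x)).
Proof. by move=> hf hg x y; rewrite hf hg. Qed.

Record perm_ (T : Type) := Perm { pf : T -> T; pg : T -> T;
  pK : forall x, pg (pf x) = x; pK' : forall x, pf (pg x) = x }.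

Lemma perm_ext T (p q : perm_ T) : (forall x, pf p x = pf q x) -> p = q.
Proof.
case: p q => f1 g1 K1 K1' [f2 g2 K2 K2'] /= e.
have ef : f1 = f2 by apply: functional_extensionality.
subst f2.
have eg : g1 = g2.
  apply: functional_extensionality => x.
  by rewrite -{1}(K2' x) K1.
subst g2. f_equal; apply: proof_irrelevance.
Qed.

Definition pmul T (p q : perm_ T) : perm_ T.
refine (@Perm T (fun x => pf p (pf q x)) (fun x => pg q (pg p x)) _ _).
- by move=> x; rewrite !pK.
- by move=> x; rewrite !pK'.
Defined.
Definition pid T : perm_ T := @Perm T id id (fun _ => erefl) (fun _ => erefl).
Definition pinv T (p : perm_ T) : perm_ T := @Perm T (pg p) (pf p) (pK' p) (pK p).

Definition Sym (T : Type) : Grp.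
refine (@Build_Grp (perm_ T) (@pmul T) (pid T) (@pinv T) _ _ _).
- by move=> x y z; apply: perm_ext.
- by move=> x; apply: perm_ext.
- by move=> x; apply: perm_ext => y /=; rewrite pK.
Defined.

Definition pre {A B : Type} (a0 : A) (F : A -> B) (b : B) : A :=
  match excluded_middle_informative (exists a, F a = b) with
  | left H => proj1_sig (constructive_indefinite_description _ H)
  | right _ => a0 end.
Lemma pre_spec A B (a0 : A) (F : A -> B) b : (exists a, F a = b) -> F (pre a0 F b) = b.
Proof.
rewrite /pre => ex; case: excluded_middle_informative => // H.
by case: constructive_indefinite_description.
Qed.
Lemma pre_inj A B (a0 : A) (F : A -> B) a : injective F -> pre a0 F (F a) = a.
Proof. by move=> inj; apply: inj; apply: pre_spec; exists a. Qed.

Section Sub.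
Variables (X : Grp) (S : X -> Prop) (S1 : S gone)
  (SM : forall x y, S x -> S y -> S (gmul x y)) (SV : forall x, S x -> S (ginv x)).
Definition subT := {x : X | S x}.
Definition submul (a b : subT) : subT := exist _ _ (SM (proj2_sig a) (proj2_sig b)).
Definition subinv (a : subT) : subT := exist _ _ (SV (proj2_sig a)).
Definition subone : subT := exist _ _ S1.
Lemma sub_eq (a b : subT) : proj1_sig a = proj1_sig b -> a = b.
Proof. case: a b => x p [y q] /= e; subst y; f_equal; apply: proof_irrelevance. Qed.
Definition SubG : Grp.
refine (@Build_Grp subT submul subone subinv _ _ _).
- by move=> a b c; apply: sub_eq; rewrite /= gmulA.
- by move=> a; apply: sub_eq; rewrite /= gmul1.
- by move=> a; apply: sub_eq; rewrite /= gmulV.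
Defined.
End Sub.

Lemma val_succ n (i : 'I_n.+1) : val (succ i) = (i.+1 %% n.+1)%N.
Proof. by rewrite /succ /= /Zp1 /= modnDmr addn1. Qed.
Lemma succ_max n : succ (@ord_max n) = ord0.
Proof. by apply: val_inj; rewrite val_succ /= modnn. Qed.
Lemma succ_lt n (i : 'I_n.+1) : i != ord_max -> val (succ i) = i.+1.
Proof.
move=> ne; rewrite val_succ modn_small //.
have := ltn_ord i; rewrite ltnS leq_eqVlt => /orP [/eqP e|] //.
by case/negP: ne; apply/eqP/val_inj.
Qed.

Section Gen.
Variables (n : nat) (V E : Grp) (f g : E -> V).

Lemma cycle_uniq (P : Grp) (jV : 'I_n.+1 -> V -> P) (tP : P) (HP : is_cycle_pi1 f g jV tP)
  (X : Grp) (a b : P -> X) : is_hom a -> is_hom b ->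
  (forall i v, a (jV i v) = b (jV i v)) -> a tP = b tP -> forall x, a x = b x.
Proof.
case: HP => hj [tr [lst up]] ha hb ej et.
have [|||psi [_ _ _ U]] := up X (fun i v => b (jV i v)) (b tP).
- by move=> i; apply: is_hom_comp.
- by move=> i e ne; rewrite tr.
- move=> e; rewrite -lst /gconj hb hb homV //.
move=> x; rewrite (U a) // (U b) //.
Qed.

Lemma cycle_gen (P : Grp) (jV : 'I_n.+1 -> V -> P) (tP : P) (HP : is_cycle_pi1 f g jV tP)
  (S : P -> Prop) : S gone -> (forall x y, S x -> S y -> S (gmul x y)) ->
  (forall x, S x -> S (ginv x)) -> (forall i v, S (jV i v)) -> S tP -> forall x, S x.
Proof.
move=> S1 SM SV Sj St.
have HP' := HP; case: HP' => hj [tr [lst up]].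
pose Q := SubG S1 SM SV.
have [|||psi [hpsi pj pt _]] := up Q (fun i v => (exist _ (jV i v) (Sj i v) : Q)) (exist _ tP St : Q).
- by move=> i x y; apply: sub_eq; rewrite /= hj.
- by move=> i e ne; apply: sub_eq; rewrite /= tr.
- by move=> e; apply: sub_eq; rewrite /= -lst.
have ex := @cycle_uniq P jV tP HP P (fun x => proj1_sig (psi x)) id _ _ _ _.
move=> x; rewrite -(ex _ _ _ _ x).
- exact: proj2_sig.
- by move=> y z; rewrite hpsi.
- by [].
- by move=> i v; rewrite pj.
- by rewrite pt.
Qed.

Lemma hnn_uniq (H : Grp) (iV : V -> H) (t : H) (HH : is_HNN f g iV t)
  (X : Grp) (a b : H -> X) : is_hom a -> is_hom b ->
  (forall v, a (iV v) = b (iV v)) -> a t = b t -> forall x, a x = b x.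
Proof.
case: HH => hi [rel up] ha hb ej et.
have [||psi [_ _ _ U]] := up X (fun v => b (iV v)) (b t).
- by apply: is_hom_comp.
- by move=> e; rewrite -rel /gconj hb hb homV.
move=> x; rewrite (U a) // (U b) //.
Qed.

Lemma hnn_gen (H : Grp) (iV : V -> H) (t : H) (HH : is_HNN f g iV t)
  (S : H -> Prop) : S gone -> (forall x y, S x -> S y -> S (gmul x y)) ->
  (forall x, S x -> S (ginv x)) -> (forall v, S (iV v)) -> S t -> forall x, S x.
Proof.
move=> S1 SM SV Sj St.
have HH' := HH; case: HH' => hi [rel up].
pose Q := SubG S1 SM SV.
have [||psi [hpsi pj pt _]] := up Q (fun v => (exist _ (iV v) (Sj v) : Q)) (exist _ t St : Q).
- by move=> x y; apply: sub_eq; rewrite /= hi.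
- by move=> e; apply: sub_eq; rewrite /= -rel.
have ex := @hnn_uniq H iV t HH H (fun x => proj1_sig (psi x)) id _ _ _ _.
move=> x; rewrite -(ex _ _ _ _ x).
- exact: proj2_sig.
- by move=> y z; rewrite hpsi.
- by [].
- by move=> v; rewrite pj.
- by rewrite pt.
Qed.
End Gen.

Arguments succ : simpl never.
Import GRing.Theory.
Local Notation "x \* y" := (gmul x y) (at level 40, left associativity).

Ltac gnorm := repeat progress rewrite ?invMg' ?invgK' ?invg1' -?gmulA ?mul1g' ?mulg1' ?mulKg' ?mulKVg' ?mulgV' ?mulVg'.

Section PermOf.
Variables (T : Type) (F : T -> T) (Finj : injective F) (Fsurj : forall y, exists x, F x = y).
Definition perm_of : perm_ T.
refine (@Perm T F (fun y => pre y F y) _ _).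
- by move=> x; apply: pre_inj.
- by move=> y; apply: pre_spec.
Defined.
End PermOf.

Section Part1.
Variables (n : nat) (V E : Grp) (f g : E -> V) (Hf : is_hom f) (Hg : is_hom g).
Variables (P : Grp) (jV : 'I_n.+1 -> V -> P) (tP : P) (HP : is_cycle_pi1 f g jV tP).

Let hj : forall i, is_hom (jV i). Proof. by case: HP. Qed.
Let tr : forall (i : 'I_n.+1) e, i != ord_max -> jV i (f e) = jV (succ i) (g e).
Proof. by case: HP => _ []. Qed.
Let lst : forall e, gconj (jV ord_max (f e)) tP = jV (succ ord_max) (g e).
Proof. by case: HP => _ [_ []]. Qed.

Lemma lst' e : jV ord_max (f e) = tP \* jV ord0 (g e) \* ginv tP.
Proof. by rewrite -succ_max -lst /gconj !gmulA mulgV' mul1g' mulgK'. Qed.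

Definition sphi (i : 'I_n.+1) (v : V) : P :=
  if i == ord_max then tP \* jV ord0 v \* ginv tP else jV (succ i) v.

Lemma sigma_ex : exists sigma : P -> P,
  [/\ is_hom sigma, (forall i v, sigma (jV i v) = sphi i v), sigma tP = tP &
      forall psi' : P -> P, is_hom psi' -> (forall i v, psi' (jV i v) = sphi i v) ->
          psi' tP = tP -> forall x, psi' x = sigma x].
Proof.
case: HP => _ [_ [_ up]]; apply: up.
- move=> i x y; rewrite /sphi; case: eqP => _; last by rewrite hj.
  by rewrite hj -!mulgA' mulKg'.
- move=> i e ne; rewrite /sphi (negPf ne); case: eqP => [e1|ne1].
  + by rewrite e1 lst'.
  + by rewrite tr //; apply/eqP.
- move=> e; rewrite /sphi eqxx succ_max; case: eqP => [e0|ne0].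
  + by rewrite /gconj !gmulA mulVg' mul1g' mulgKV' {1}e0 lst'.
  + rewrite /gconj !gmulA mulVg' mul1g' mulgKV' tr //; apply/eqP => e0; apply: ne0.
    by rewrite e0.
Qed.

Definition sigma : P -> P := proj1_sig (constructive_indefinite_description _ sigma_ex).
Lemma sigma_spec : [/\ is_hom sigma, (forall i v, sigma (jV i v) = sphi i v), sigma tP = tP &
      forall psi' : P -> P, is_hom psi' -> (forall i v, psi' (jV i v) = sphi i v) ->
          psi' tP = tP -> forall x, psi' x = sigma x].
Proof. rewrite /sigma; by case: constructive_indefinite_description. Qed.
Lemma sigma_hom : is_hom sigma. Proof. by case: sigma_spec. Qed.
Lemma sigma_tP : sigma tP = tP. Proof. by case: sigma_spec. Qed.
Lemma sigma_jV i v : sigma (jV i v) = sphi i v. Proof. by case: sigma_spec. Qed.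

Lemma iter_hom m : is_hom (iter m sigma).
Proof. elim: m => [|m IH] x y //=; by rewrite IH sigma_hom. Qed.
Lemma iter_tP m : iter m sigma tP = tP.
Proof. by elim: m => //= m ->; rewrite sigma_tP. Qed.

Lemma iter_jV m (i : 'I_n.+1) v : (i + m <= n)%N -> iter m sigma (jV i v) = jV (inord (i + m)) v.
Proof.
elim: m => [|m IH] le /=; first by rewrite addn0 inord_val.
have lt : (i + m < n)%N by rewrite -addnS.
rewrite IH; last by apply: ltnW.
rewrite sigma_jV /sphi; case: eqP => [e|ne].
  by have := congr1 val e; rewrite /= (inordK (ltnW lt)) => e'; move: lt; rewrite e' ltnn.
congr jV; apply: val_inj; rewrite succ_lt; last by apply/eqP.
by rewrite /= !inordK ?addnS // ltnS ?(ltnW lt).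
Qed.

Lemma inord_max : inord n = (@ord_max n). Proof. by apply: val_inj; rewrite /= inordK. Qed.
Lemma inord0 : inord 0 = (@ord0 n). Proof. by apply: val_inj; rewrite /= inordK. Qed.

Lemma conj_hom (X : Grp) (c : X) : is_hom (fun x => c \* x \* ginv c).
Proof. by move=> x y; rewrite !gmulA mulgKV'. Qed.

Lemma iterS_split m i x : (i <= m)%N -> iter m.+1 sigma x = iter i sigma (sigma (iter (m - i) sigma x)).
Proof.
move=> le; rewrite -(iterS (m - i) sigma x) -(iterD i (m - i).+1 sigma x).
by rewrite addnS subnKC.
Qed.

Lemma iter_full x : iter n.+1 sigma x = tP \* x \* ginv tP.
Proof.
apply: (cycle_uniq HP (iter_hom _) (conj_hom tP)); last first.
  by rewrite iter_tP mulgK'.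
move=> i v.
have le : (i <= n)%N by rewrite -ltnS.
rewrite (iterS_split _ le) iter_jV; last by rewrite subnKC.
rewrite subnKC // inord_max sigma_jV /sphi eqxx.
rewrite (iter_hom i (tP \* _)) (iter_hom i tP) (homV (iter_hom _)) !iter_tP.
by have := @iter_jV i ord0 v; rewrite /= add0n inord_val => ->.
Qed.

Lemma sigma_inj x y : sigma x = sigma y -> x = y.
Proof.
move=> e; have := congr1 (iter n sigma) e; rewrite -(iterSr n sigma x) -(iterSr n sigma y) !iter_full.
by move/mulg_cancr/mulg_cancl.
Qed.
Lemma sigma_surj y : sigma (iter n sigma (ginv tP \* y \* tP)) = y.
Proof. by rewrite -(iterS n sigma) iter_full !gmulA mulgV' mul1g' mulgK'. Qed.
Lemma iter_surj m y : (m <= n.+1)%N -> iter m sigma (iter (n.+1 - m) sigma (ginv tP \* y \* tP)) = y.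
Proof. by move=> le; rewrite -iterD subnKC // iter_full !gmulA mulgV' mul1g' mulgK'. Qed.

Lemma sigma_g0 e : sigma (jV ord0 (g e)) = jV ord0 (f e).
Proof.
rewrite sigma_jV /sphi; case: eqP => [e0|ne0].
  by rewrite {2}e0 lst'.
by rewrite tr //; apply/eqP => e0; apply: ne0; rewrite e0.
Qed.

Definition vactF (v : V) (pj : P * 'I_n.+1) : P * 'I_n.+1 := (jV ord0 v \* pj.1, pj.2).
Lemma vact_inj v : injective (vactF v).
Proof. by case=> p j [q k] [/mulg_cancl -> ->]. Qed.
Lemma vact_surj v y : exists x, vactF v x = y.
Proof. by case: y => q j; exists (ginv (jV ord0 v) \* q, j); rewrite /vactF /= mulKVg'. Qed.
Definition vact v : Sym (P * 'I_n.+1) := perm_of (@vact_inj v) (@vact_surj v).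

Definition tactF (pj : P * 'I_n.+1) : P * 'I_n.+1 :=
  if pj.2 == ord_max then (sigma pj.1 \* tP, ord0) else (sigma pj.1, succ pj.2).

Lemma succ_ne0 (j : 'I_n.+1) : j != ord_max -> succ j != ord0.
Proof. by move=> ne; apply/eqP => /(congr1 val); rewrite succ_lt. Qed.

Lemma tact_inj : injective tactF.
Proof.
case=> p j [q k]; rewrite /tactF /=.
case: eqP => [ej|nej]; case: eqP => [ek|nek] //=.
- by case=> /mulg_cancr /sigma_inj ->; congr pair; apply: etrans ej (esym ek).
- move=> /(congr1 snd) /= e; suff : succ k != ord0 by rewrite -e eqxx.
  by apply: succ_ne0; apply/eqP.
- move=> /(congr1 snd) /= e; suff : succ j != ord0 by rewrite e eqxx.
  by apply: succ_ne0; apply/eqP.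
- move=> e; have [/sigma_inj -> e2] := (congr1 fst e, congr1 snd e).
  move: e2 => /= /(congr1 val); rewrite !succ_lt; try by apply/eqP.
  by case=> /val_inj ->.
Qed.

Lemma tact_surj y : exists x, tactF x = y.
Proof.
case: y => q j; case: (altP (j =P ord0)) => [->|ne].
  exists (iter n sigma (ginv tP \* (q \* ginv tP) \* tP), ord_max).
  by rewrite /tactF /= eqxx sigma_surj mulgKV'.
have jpos : (0 < j)%N by rewrite lt0n; apply: contra ne => /eqP e; apply/eqP/val_inj.
have lt : (j.-1 < n)%N by rewrite -ltnS prednK.
have nm : (inord j.-1 : 'I_n.+1) != ord_max.
  by apply/eqP => /(congr1 val); rewrite /= (inordK (ltnW lt)) => e; move: lt; rewrite e ltnn.
exists (iter n sigma (ginv tP \* q \* tP), inord j.-1).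
rewrite /tactF /= (negPf nm) sigma_surj; congr pair; apply: val_inj.
by rewrite succ_lt // /= (inordK (ltnW lt)) prednK.
Qed.
Definition tact : Sym (P * 'I_n.+1) := perm_of tact_inj tact_surj.

Lemma vact_hom : is_hom vact.
Proof. by move=> x y; apply: perm_ext => -[p j]; rewrite /= /vactF /= (hj _ x y) gmulA. Qed.

Lemma vt_rel e : gconj (vact (f e)) tact = vact (g e).
Proof.
apply: perm_ext => -[p j]; rewrite /=.
suff <- : tactF (vactF (g e) (p, j)) = vactF (f e) (tactF (p, j)) by rewrite pre_inj //; apply: tact_inj.
rewrite /tactF /vactF /=; case: eqP => _; by rewrite sigma_hom sigma_g0 ?gmulA.
Qed.

Variables (H : Grp) (iV : V -> H) (t : H) (HH : is_HNN f g iV t).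
Let hiV : is_hom iV. Proof. by case: HH. Qed.
Let hrel : forall e, gconj (iV (f e)) t = iV (g e). Proof. by case: HH => _ []. Qed.

Lemma rhoH_ex : exists psi : H -> Sym (P * 'I_n.+1),
  [/\ is_hom psi, (forall v, psi (iV v) = vact v), psi t = tact &
      forall psi' : H -> Sym (P * 'I_n.+1), is_hom psi' -> (forall v, psi' (iV v) = vact v) ->
          psi' t = tact -> forall x, psi' x = psi x].
Proof. case: HH => _ [_ up]; apply: up; [exact: vact_hom | exact: vt_rel]. Qed.
Definition rhoH := proj1_sig (constructive_indefinite_description _ rhoH_ex).
Lemma rhoH_spec : [/\ is_hom rhoH, (forall v, rhoH (iV v) = vact v), rhoH t = tact &
      forall psi' : H -> Sym (P * 'I_n.+1), is_hom psi' -> (forall v, psi' (iV v) = vact v) ->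
          psi' t = tact -> forall x, psi' x = rhoH x].
Proof. by rewrite /rhoH; case: constructive_indefinite_description. Qed.
Lemma rhoH_hom : is_hom rhoH. Proof. by case: rhoH_spec. Qed.
Lemma rhoH_iV v : rhoH (iV v) = vact v. Proof. by case: rhoH_spec. Qed.
Lemma rhoH_t : rhoH t = tact. Proof. by case: rhoH_spec. Qed.

Definition tpow (m : nat) : H := iter m (fun x => x \* t) gone.
Lemma tpowS m : tpow m.+1 = tpow m \* t. Proof. by []. Qed.
Lemma tpow0 : tpow 0 = gone. Proof. by []. Qed.

Lemma t_f e : t \* iV (g e) \* ginv t = iV (f e).
Proof. by rewrite -hrel /gconj; gnorm. Qed.

Definition pphi (i : 'I_n.+1) (v : V) : H := tpow i \* iV v \* ginv (tpow i).

Lemma phi_ex : exists psi : P -> H,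
  [/\ is_hom psi, (forall i v, psi (jV i v) = pphi i v), psi tP = tpow n.+1 &
      forall psi' : P -> H, is_hom psi' -> (forall i v, psi' (jV i v) = pphi i v) ->
          psi' tP = tpow n.+1 -> forall x, psi' x = psi x].
Proof.
case: HP => _ [_ [_ up]]; apply: up.
- move=> i x y; rewrite /pphi hiV; gnorm; done.
- move=> i e ne; rewrite /pphi succ_lt //; rewrite (tpowS i) -(t_f e); gnorm; done.
- move=> e; rewrite /pphi succ_max (tpowS n) /gconj -[nat_of_ord ord0]/0 tpow0; gnorm; rewrite -hrel /gconj; gnorm; done.
Qed.
Definition phiP := proj1_sig (constructive_indefinite_description _ phi_ex).
Lemma phiP_spec : [/\ is_hom phiP, (forall i v, phiP (jV i v) = pphi i v), phiP tP = tpow n.+1 &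
      forall psi' : P -> H, is_hom psi' -> (forall i v, psi' (jV i v) = pphi i v) ->
          psi' tP = tpow n.+1 -> forall x, psi' x = phiP x].
Proof. by rewrite /phiP; case: constructive_indefinite_description. Qed.
Lemma phiP_hom : is_hom phiP. Proof. by case: phiP_spec. Qed.
Lemma phiP_jV i v : phiP (jV i v) = pphi i v. Proof. by case: phiP_spec. Qed.
Lemma phiP_tP : phiP tP = tpow n.+1. Proof. by case: phiP_spec. Qed.

Lemma pf_rhoHt x y : pf (rhoH (x \* t)) y = pf (rhoH x) (tactF y).
Proof. by rewrite rhoH_hom rhoH_t. Qed.
Lemma pf_rhoH1 y : pf (rhoH gone) y = y.
Proof. by rewrite (hom1 rhoH_hom). Qed.
Lemma pf_rhoHM x z y : pf (rhoH (x \* z)) y = pf (rhoH x) (pf (rhoH z) y).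
Proof. by rewrite rhoH_hom. Qed.
Lemma pf_rhoHV x y : pf (rhoH (ginv x)) y = pg (rhoH x) y.
Proof. by rewrite (homV rhoH_hom). Qed.

Lemma succ_inord j : (j < n)%N -> succ (inord j : 'I_n.+1) = inord j.+1.
Proof.
move=> lt; have ne : (inord j : 'I_n.+1) != ord_max.
  by apply/eqP => /(congr1 val); rewrite /= (inordK (ltnW lt)) => e; move: lt; rewrite e ltnn.
by apply: val_inj; rewrite succ_lt // /= (inordK (ltnW lt)) inordK.
Qed.

Lemma tactF_lt q j : (j < n)%N -> tactF (q, inord j) = (sigma q, inord j.+1).
Proof.
move=> lt; rewrite /tactF /=; case: eqP => [e|_]; last by rewrite succ_inord.
by have := congr1 val e; rewrite /= (inordK (ltnW lt)) => e'; move: lt; rewrite e' ltnn.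
Qed.

Lemma L1 m : forall j q, (j + m <= n)%N -> pf (rhoH (tpow m)) (q, inord j) = (iter m sigma q, inord (j + m)).
Proof.
elim: m => [|m IH] j q le; first by rewrite tpow0 pf_rhoH1 addn0.
rewrite tpowS pf_rhoHt tactF_lt; last by apply: leq_trans le; rewrite addnS ltnS leq_addr.
rewrite IH; last by rewrite addSnnS.
by rewrite -addSnnS -(iterSr m sigma q).
Qed.

Lemma L2 m : forall j q, (j + m = n)%N -> pf (rhoH (tpow m.+1)) (q, inord j) = (iter m.+1 sigma q \* tP, ord0).
Proof.
elim: m => [|m IH] j q e.
  move: e; rewrite addn0 => ->.
  by rewrite tpowS tpow0 pf_rhoHt pf_rhoH1 /tactF /= inord_max eqxx.
rewrite tpowS pf_rhoHt tactF_lt; last by rewrite -e addnS ltnS leq_addr.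
rewrite IH; last by rewrite -e addSnnS.
by rewrite -(iterSr m.+1 sigma q).
Qed.

Lemma L2' m j q : (0 < m)%N -> (j + m = n.+1)%N -> pf (rhoH (tpow m)) (q, inord j) = (iter m sigma q \* tP, ord0).
Proof. by case: m => // m _ e; apply: L2; rewrite addnS in e; case: e. Qed.

Lemma claim1 x q : pf (rhoH (phiP x)) (q, ord0) = (x \* q, ord0).
Proof.
move: x q; apply: (cycle_gen HP).
- by move=> q; rewrite (hom1 phiP_hom) pf_rhoH1 mul1g'.
- by move=> x y Sx Sy q; rewrite phiP_hom pf_rhoHM Sy Sx gmulA.
- move=> x Sx q; rewrite (homV phiP_hom) pf_rhoHV.
  by rewrite -{1}(mulKVg' x q) -Sx pK.
- move=> i v q; rewrite phiP_jV /pphi.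
  case: (posnP i) => [i0|ipos].
    have -> : i = ord0 by apply: val_inj.
    rewrite -[nat_of_ord ord0]/0 tpow0; gnorm; by rewrite rhoH_iV.
  set r := iter (n.+1 - i) sigma (ginv tP \* q \* tP) \* ginv tP.
  have hr : iter i sigma r \* tP = q.
    rewrite /r (iter_hom i) (iter_surj _ (ltnW (ltn_ord i))) (homV (iter_hom i)) iter_tP.
    by rewrite mulgKV'.
  have ej : ((n.+1 - i) + i)%N = n.+1 by rewrite subnK // ltnW.
  have e1 : pf (rhoH (tpow i)) (r, inord (n.+1 - i)) = (q, ord0).
    by rewrite L2' // hr.
  rewrite !pf_rhoHM pf_rhoHV -e1 pK rhoH_iV /= /vactF /=.
  rewrite L2' // (iter_hom i) -hr gmulA.
  have := @iter_jV i ord0 v; rewrite /= add0n inord_val => ->; last by rewrite -ltnS.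
  done.
- by move=> q; rewrite phiP_tP -inord0 L2 // inord0 iter_full; gnorm.
Qed.

Lemma phiP_inj : injective phiP.
Proof.
move=> x y e; have := claim1 x gone; rewrite e claim1.
by case=> e'; rewrite -(mulg1' x) -(mulg1' y) e'.
Qed.

Variables (rho : H -> Zk n) (Hrho : is_hom rho)
  (Hrho0 : forall v, rho (iV v) = 0%R) (Hrho1 : rho t = Zp1).

Lemma rho_tpow m : val (rho (tpow m)) = (m %% n.+1)%N.
Proof.
elim: m => [|m IH]; first by rewrite tpow0 (hom1 Hrho).
rewrite tpowS Hrho Hrho1 /=.
by rewrite IH /= modnDm addn1.
Qed.

Lemma rho_phiP y : rho (phiP y) = 0%R.
Proof.
move: y; apply: (cycle_gen HP).
- by rewrite (hom1 phiP_hom) (hom1 Hrho).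
- by move=> x y Sx Sy; rewrite phiP_hom Hrho Sx Sy /= addr0.
- by move=> x Sx; rewrite (homV phiP_hom) (homV Hrho) Sx /= oppr0.
- move=> i v; rewrite phiP_jV /pphi !Hrho (homV Hrho) Hrho0 /=.
  by rewrite addr0 subrr.
- by apply: val_inj; rewrite phiP_tP rho_tpow modnn.
Qed.

Definition S0 (x : H) := exists p (j : nat), (j <= n)%N /\ x = phiP p \* tpow j.

Lemma FiV y v : S0 y -> S0 (y \* iV v).
Proof.
case=> p [j [le ->]]; exists (p \* jV (inord j) v), j; split=> //.
rewrite phiP_hom phiP_jV /pphi inordK //; gnorm; done.
Qed.
Lemma Ft y : S0 y -> S0 (y \* t).
Proof.
case=> p [j [le ->]]; case: (ltnP j n) => [lt|ge].
  by exists p, j.+1; split=> //; rewrite tpowS; gnorm.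
have ej : j = n by apply/eqP; rewrite eqn_leq le ge.
subst j; exists (p \* tP), 0%N; split=> //.
by rewrite phiP_hom phiP_tP tpowS tpow0; gnorm.
Qed.
Lemma Ftinv y : S0 y -> S0 (y \* ginv t).
Proof.
case=> p [[|j] [le ->]].
  exists (p \* ginv tP), n; split=> //.
  by rewrite phiP_hom (homV phiP_hom) phiP_tP tpowS tpow0; gnorm.
by exists p, j; split; [apply: ltnW | rewrite tpowS; gnorm].
Qed.

Lemma S0_all x : rho x = 0%R -> exists y, phiP y = x.
Proof.
move=> rx.
have all : forall z, forall y, S0 y <-> S0 (y \* z).
  apply: (hnn_gen HH).
  - by move=> y; rewrite mulg1'.
  - by move=> a b Sa Sb y; rewrite Sa Sb gmulA.
  - by move=> a Sa y; rewrite (Sa (y \* ginv a)) mulgKV'.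
  - move=> v y; split; first exact: FiV.
    by move=> /(@FiV _ (ginv v)); rewrite (homV hiV) mulgK'.
  - move=> y; split; first exact: Ft.
    by move=> /Ftinv; rewrite mulgK'.
have : S0 (gone \* x).
  apply/(all x gone); exists gone, 0%N; split=> //; by rewrite (hom1 phiP_hom) tpow0 mul1g'.
rewrite mul1g' => -[p [j [le ex]]]; exists p.
have : val (rho x) = 0%N by rewrite rx.
rewrite ex Hrho rho_phiP /= add0n rho_tpow !modn_mod modn_small // => j0.
by rewrite j0 tpow0 mulg1'.
Qed.

Lemma part1 : exists phi : P -> H,
      [/\ is_hom phi, injective phi &
          forall x : H, rho x = 0%R <-> exists y, phi y = x].
Proof.
exists phiP; split; [exact: phiP_hom | exact: phiP_inj |].
move=> x; split; first exact: S0_all.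
by case=> y <-; apply: rho_phiP.
Qed.
End Part1.


Section Rep.
Variables (W : Grp) (S : W -> Prop) (S1 : S gone)
  (SM : forall x y, S x -> S y -> S (x \* y)) (SV : forall x, S x -> S (ginv x)).

Definition rep (w : W) : W :=
  match excluded_middle_informative (S w) with
  | left _ => gone
  | right _ => epsilon (inhabits w) (fun r => S (w \* ginv r)) end.

Lemma rep_S w : S (w \* ginv (rep w)).
Proof.
rewrite /rep; case: excluded_middle_informative => Sw; first by rewrite invg1' mulg1'.
by apply: (epsilon_spec (inhabits w) (fun r => S (w \* ginv r))); exists w; rewrite mulgV'.
Qed.

Lemma S_l s w : S s -> S (s \* w) <-> S w.
Proof. move=> Ss; split=> [|Sw]; last exact: SM. by move=> /(SM (SV Ss)); rewrite mulKg'. Qed.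

Lemma rep_coset s w : S s -> rep (s \* w) = rep w.
Proof.
move=> Ss; rewrite /rep.
case: excluded_middle_informative => Sw'; case: excluded_middle_informative => Sw //.
- by case: Sw; apply/(S_l _ Ss).
- by case: Sw'; apply/(S_l _ Ss).
have -> : (fun r => S (s \* w \* ginv r)) = (fun r => S (w \* ginv r)).
  apply: functional_extensionality => r; apply: propositional_extensionality.
  by rewrite -gmulA S_l.
by rewrite (proof_irrelevance _ (inhabits (s \* w)) (inhabits w)).
Qed.

Lemma rep_in s : S s -> rep s = gone.
Proof. by rewrite /rep; case: excluded_middle_informative. Qed.

Lemma rep_idem w : rep (rep w) = rep w.
Proof.
have := rep_S w; set r := rep w => Sr.
have e : r = ginv (w \* ginv r) \* w by gnorm.
by rewrite {1}e rep_coset //; apply: SV.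
Qed.
End Rep.

Section Part2.
Variables (n : nat) (V E Vs : Grp) (f g : E -> V) (Hf : is_hom f) (Hg : is_hom g)
  (Hfi : injective f) (Hgi : injective g)
  (h : 'I_n.+1 -> V -> Vs) (Hh : forall i, is_hom (h i)) (Hhi : forall i, injective (h i)).
Variables (P : Grp) (jV : 'I_n.+1 -> V -> P) (tP : P) (HP : is_cycle_pi1 f g jV tP).
Variables (G : Grp) (iW : Vs -> G) (tG : 'I_n.+1 -> G) (HG : is_rose_pi1 f g h iW tG).

Let hj : forall i, is_hom (jV i). Proof. by case: HP. Qed.
Let tr : forall (i : 'I_n.+1) e, i != ord_max -> jV i (f e) = jV (succ i) (g e).
Proof. by case: HP => _ []. Qed.
Let lst : forall e, gconj (jV ord_max (f e)) tP = jV (succ ord_max) (g e).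
Proof. by case: HP => _ [_ []]. Qed.
Let hiW : is_hom iW. Proof. by case: HG. Qed.
Let rrel : forall i e, gconj (iW (h i (f e))) (tG i) = iW (h (succ i) (g e)).
Proof. by case: HG => _ []. Qed.

Local Notation I := ('I_n.+1).
Definition src (i : I) (e : bool) : I := if e then i else succ i.
Definition dst (i : I) (e : bool) : I := if e then succ i else i.
Definition fv (e : bool) : E -> V := if e then g else f.
Definition F (i : I) (e : bool) (x : E) : Vs := h (dst i e) (fv e x).
Definition SS i e (w : Vs) : Prop := exists x, F i e x = w.
Definition mu i e (w : Vs) : Vs := F i (~~ e) (pre gone (F i e) w).

Lemma src_neg i e : src i (~~ e) = dst i e. Proof. by case: e. Qed.
Lemma dst_neg i e : dst i (~~ e) = src i e. Proof. by case: e. Qed.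
Lemma fv_hom e : is_hom (fv e). Proof. by case: e. Qed.
Lemma fv_inj e : injective (fv e). Proof. by case: e. Qed.
Lemma F_hom i e : is_hom (F i e). Proof. by apply: is_hom_comp; [apply: fv_hom | apply: Hh]. Qed.
Lemma F_inj i e : injective (F i e). Proof. by move=> x y /Hhi /fv_inj. Qed.
Lemma mu_F i e x : mu i e (F i e x) = F i (~~ e) x.
Proof. by rewrite /mu pre_inj //; apply: F_inj. Qed.

Lemma SS1 i e : SS i e gone. Proof. by exists gone; rewrite (hom1 (F_hom _ _)). Qed.
Lemma SSM i e x y : SS i e x -> SS i e y -> SS i e (x \* y).
Proof. by case=> a <- [b <-]; exists (a \* b); rewrite F_hom. Qed.
Lemma SSV i e x : SS i e x -> SS i e (ginv x).
Proof. by case=> a <-; exists (ginv a); rewrite (homV (F_hom _ _)). Qed.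

Definition repS i e := rep (SS i e).

Lemma mu_S i e s : SS i e s -> SS i (~~ e) (mu i e s).
Proof. by case=> x <-; rewrite mu_F; exists x. Qed.
Lemma mu_inv i e s : SS i e s -> mu i (~~ e) (mu i e s) = s.
Proof. by case=> x <-; rewrite !mu_F negbK. Qed.
Lemma mu_mul i e s1 s2 : SS i e s1 -> SS i e s2 -> mu i e (s1 \* s2) = mu i e s1 \* mu i e s2.
Proof. by case=> x <- [y <-]; rewrite -F_hom !mu_F F_hom. Qed.

Definition L := (I * bool * Vs)%type.

Definition nopinch (i : I) (e : bool) (w : Vs) (l : seq L) : Prop :=
  match l with [::] => True | (j, e', _) :: _ => ~ (j = i /\ e' = ~~ e /\ w = gone) end.
Fixpoint nl (l : seq L) : Prop :=
  match l with
  | [::] => True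
  | (i, e, w) :: l' => repS i e w = w /\ nopinch i e w l' /\ nl l' end.

Definition hd_w (l : seq L) : Vs := match l with (_, _, w) :: _ => w | [::] => gone end.
Definition cc (i : I) (e : bool) (r : Vs) (l : seq L) : Prop :=
  match l with (j, e', _) :: _ => r = gone /\ j = i /\ e' = ~~ e | [::] => False end.

Definition act (i : I) (e : bool) (p : Vs * seq L) : Vs * seq L :=
  let r := repS i e p.1 in let b := p.1 \* ginv r in
  if excluded_middle_informative (cc i e r p.2) then (mu i e b \* hd_w p.2, behead p.2)
  else (mu i e b, (i, e, r) :: p.2).

Lemma b_S i e w : SS i e (w \* ginv (repS i e w)).
Proof. by apply: rep_S; eauto using SS1, SSM, SSV. Qed.
Lemma repS_coset i e s w : SS i e s -> repS i e (s \* w) = repS i e w.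
Proof. by apply: rep_coset; eauto using SS1, SSM, SSV. Qed.
Lemma repS_in i e s : SS i e s -> repS i e s = gone.
Proof. exact: rep_in. Qed.
Lemma repS_idem i e w : repS i e (repS i e w) = repS i e w.
Proof. by apply: rep_idem; eauto using SS1, SSM, SSV. Qed.

Lemma act_normal i e p : nl p.2 -> nl (act i e p).2.
Proof.
case: p => w0 l /= nll; rewrite /act /=; case: excluded_middle_informative => C /=.
  by case: l nll C => [|[[j e'] w1] l'] //=; case=> _ [].
split; first exact: repS_idem.
split=> //; case: l nll C => [|[[j e'] w1] l'] //= _ C.
by case=> ? [? ?]; apply: C; do !split.
Qed.

Lemma act_inv i e p : nl p.2 -> act i (~~ e) (act i e p) = p.
Proof.
case: p => w0 l /= nll; rewrite /act /=.
have bS := b_S i e w0.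
case: excluded_middle_informative => C /=.
- case: l nll C => [|[[j e'] w1] l'] //= [rw1 [np nll']] [r1 [ji ee]]; subst j e'.
  have muS := mu_S bS.
  rewrite (repS_coset _ muS) rw1 /=.
  case: excluded_middle_informative => C2.
    exfalso; case: l' np nll' C2 => [|[[j e'] w2] l''] //= np _ [w10 [ji ee]].
    by apply: np.
  rewrite mulgK' mu_inv // r1 invg1' mulg1'; done.
- have muS := mu_S bS.
  rewrite (repS_in muS) invg1' mulg1'.
  case: excluded_middle_informative => C2 /=; last by case: C2; rewrite negbK.
  by rewrite mu_inv // mulgKV'.
Qed.

Lemma act_S i e s p : SS i e s ->
  act i e (s \* p.1, p.2) = (mu i e s \* (act i e p).1, (act i e p).2).
Proof.
case: p => w0 l Ss; rewrite /act /= (repS_coset _ Ss).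
by case: excluded_middle_informative => C /=; rewrite -gmulA mu_mul ?gmulA //; apply: b_S.
Qed.

Definition Om := {p : Vs * seq L | nl p.2}.
Lemma Om_eq (a b : Om) : proj1_sig a = proj1_sig b -> a = b.
Proof. case: a b => x p [y q] /= e; subst y; f_equal; apply: proof_irrelevance. Qed.

Definition actO i e (w : Om) : Om := exist (fun p => nl p.2) (act i e (proj1_sig w)) (act_normal i e (proj2_sig w)).
Lemma actO_inv i e w : actO i (~~ e) (actO i e w) = w.
Proof. by apply: Om_eq; rewrite /= act_inv //; exact: (proj2_sig w). Qed.

Definition tperm (i : I) : Sym Om.
refine (@Perm Om (actO i true) (actO i false) _ _).
- by move=> w; apply: (actO_inv i true).
- by move=> w; apply: (actO_inv i false).
Defined.

Definition wactO (x : Vs) (w : Om) : Om := exist (fun p => nl p.2) (x \* (proj1_sig w).1, (proj1_sig w).2) (proj2_sig w).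
Definition wperm (x : Vs) : Sym Om.
refine (@Perm Om (wactO x) (wactO (ginv x)) _ _).
- by move=> w; apply: Om_eq; rewrite /= mulKg'; case: (proj1_sig w).
- by move=> w; apply: Om_eq; rewrite /= mulKVg'; case: (proj1_sig w).
Defined.

Lemma wperm_hom : is_hom wperm.
Proof. by move=> x y; apply: perm_ext => w; apply: Om_eq; rewrite /= gmulA. Qed.

Lemma G_rel i e : gconj (wperm (h i (f e))) (tperm i) = wperm (h (succ i) (g e)).
Proof.
apply: perm_ext => w /=.
have Ss : SS i true (h (succ i) (g e)) by exists e.
have <- : actO i true (wactO (h (succ i) (g e)) w) = wactO (h i (f e)) (actO i true w).
  apply: Om_eq; rewrite /= act_S //.
  by rewrite -[h (succ i) (g e)]/(F i true e) mu_F.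
by rewrite (actO_inv i true).
Qed.

Lemma rhoG_ex : exists psi : G -> Sym Om,
  [/\ is_hom psi, (forall w, psi (iW w) = wperm w), (forall i, psi (tG i) = tperm i) &
      forall psi' : G -> Sym Om, is_hom psi' -> (forall w, psi' (iW w) = wperm w) ->
          (forall i, psi' (tG i) = tperm i) -> forall x, psi' x = psi x].
Proof. case: HG => _ [_ up]; apply: up; [exact: wperm_hom | exact: G_rel]. Qed.
Definition rhoG := proj1_sig (constructive_indefinite_description _ rhoG_ex).
Lemma rhoG_spec : [/\ is_hom rhoG, (forall w, rhoG (iW w) = wperm w), (forall i, rhoG (tG i) = tperm i) &
      forall psi' : G -> Sym Om, is_hom psi' -> (forall w, psi' (iW w) = wperm w) ->
          (forall i, psi' (tG i) = tperm i) -> forall x, psi' x = rhoG x].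
Proof. by rewrite /rhoG; case: constructive_indefinite_description. Qed.
Lemma rhoG_hom : is_hom rhoG. Proof. by case: rhoG_spec. Qed.
Lemma rhoG_iW w : rhoG (iW w) = wperm w. Proof. by case: rhoG_spec. Qed.
Lemma rhoG_tG i : rhoG (tG i) = tperm i. Proof. by case: rhoG_spec. Qed.

Lemma pf_rhoGM x z y : pf (rhoG (x \* z)) y = pf (rhoG x) (pf (rhoG z) y).
Proof. by rewrite rhoG_hom. Qed.
Lemma pf_rhoG1 y : pf (rhoG gone) y = y.
Proof. by rewrite (hom1 rhoG_hom). Qed.
Lemma pf_rhoGt i y : pf (rhoG (tG i)) y = actO i true y.
Proof. by rewrite rhoG_tG. Qed.
Lemma pf_rhoGtV i y : pf (rhoG (ginv (tG i))) y = actO i false y.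
Proof. by rewrite (homV rhoG_hom) rhoG_tG. Qed.
Lemma pf_rhoGw w y : pf (rhoG (iW w)) y = wactO w y.
Proof. by rewrite rhoG_iW. Qed.

Fixpoint Tinv (m : nat) : G := if m is m'.+1 then Tinv m' \* tG (inord m') else gone.

Definition psiv (i : I) (v : V) : G := Tinv i \* iW (h i v) \* ginv (Tinv i).

Lemma tG_g i e : tG i \* iW (h (succ i) (g e)) \* ginv (tG i) = iW (h i (f e)).
Proof. by rewrite -rrel /gconj; gnorm. Qed.

Lemma Psi_ex : exists psi : P -> G,
  [/\ is_hom psi, (forall i v, psi (jV i v) = psiv i v), psi tP = Tinv n \* tG ord_max &
      forall psi' : P -> G, is_hom psi' -> (forall i v, psi' (jV i v) = psiv i v) ->
          psi' tP = Tinv n \* tG ord_max -> forall x, psi' x = psi x].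
Proof.
case: HP => _ [_ [_ up]]; apply: up.
- by move=> i x y; rewrite /psiv Hh hiW; gnorm.
- move=> i e ne; rewrite /psiv succ_lt //=.
  by rewrite inord_val -(tG_g i e); gnorm.
- move=> e; rewrite /psiv succ_max /gconj -[nat_of_ord ord0]/0; rewrite /=.
  by have := rrel ord_max e; rewrite succ_max /gconj => <-; gnorm.
Qed.
Definition Psi := proj1_sig (constructive_indefinite_description _ Psi_ex).
Lemma Psi_spec : [/\ is_hom Psi, (forall i v, Psi (jV i v) = psiv i v), Psi tP = Tinv n \* tG ord_max &
      forall psi' : P -> G, is_hom psi' -> (forall i v, psi' (jV i v) = psiv i v) ->
          psi' tP = Tinv n \* tG ord_max -> forall x, psi' x = Psi x].
Proof. by rewrite /Psi; case: constructive_indefinite_description. Qed.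
Lemma Psi_hom : is_hom Psi. Proof. by case: Psi_spec. Qed.
Lemma Psi_jV i v : Psi (jV i v) = psiv i v. Proof. by case: Psi_spec. Qed.
Lemma Psi_tP : Psi tP = Tinv n \* tG ord_max. Proof. by case: Psi_spec. Qed.

Definition preh (c : I) (w : Vs) : V := pre gone (h c) w.
Definition Img (c : I) (w : Vs) : Prop := exists v, h c v = w.
Lemma preh_h c v : preh c (h c v) = v.
Proof. by rewrite /preh pre_inj. Qed.

Fixpoint GoodL (c : I) (l : seq L) : Prop :=
  match l with
  | [::] => True
  | (i, e, w) :: l' => src i e = c /\ Img (dst i e) w /\ GoodL (dst i e) l' end.
Definition Good (c : I) (p : Vs * seq L) : Prop := Img c p.1 /\ GoodL c p.2.

Definition edge (i : I) (e : bool) : P := if i == ord_max then (if e then tP else ginv tP) else gone.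
Fixpoint Dl (l : seq L) : P :=
  match l with
  | [::] => gone
  | (i, e, w) :: l' => edge i e \* (jV (dst i e) (preh (dst i e) w) \* Dl l') end.
Definition D (c : I) (p : Vs * seq L) : P := jV c (preh c p.1) \* Dl p.2.

Lemma edge_neg i e : edge i (~~ e) = ginv (edge i e).
Proof. by rewrite /edge; case: eqP => _; case: e; rewrite ?invgK' ?invg1'. Qed.

Lemma Rel i e x : jV (src i e) (fv (~~ e) x) \* edge i e = edge i e \* jV (dst i e) (fv e x).
Proof.
rewrite /edge /src /dst; case: eqP => [->|ne]; case: e => /=.
- by rewrite -lst /gconj; gnorm.
- by rewrite -lst /gconj; gnorm.
- by rewrite mulg1' mul1g' tr //; apply/eqP.
- by rewrite mulg1' mul1g' tr //; apply/eqP.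
Qed.

Lemma letter i e p : Good (dst i e) p ->
  Good (src i e) (act i e p) /\ D (src i e) (act i e p) = edge i e \* D (dst i e) p.
Proof.
case: p => w0 l [[u hu] Gl]; rewrite /= in hu Gl.
set d := dst i e.
have [x hx] := b_S i e w0.
set r := repS i e w0 in hx.
have hr : r = h d (ginv (fv e x) \* u).
  rewrite Hh (homV (Hh _)) -[h d (fv e x)]/(F i e x) hx hu; gnorm; done.
have hmu : mu i e (w0 \* ginv r) = h (src i e) (fv (~~ e) x).
  by rewrite -hx mu_F /F dst_neg.
rewrite /act /=; fold r; case: excluded_middle_informative => C.
- case: l Gl C => [|[[j e'] w1] l'] //= [_ [[u1 hu1] Gl']] [r1 [ji ee]]; subst j e'.
  rewrite dst_neg in hu1 Gl'.
  move: hmu; rewrite r1 invg1' mulg1' => hmu.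
  have eu : u = fv e x.
    apply: (@Hhi d u (fv e x)); rewrite hu -[h d (fv e x)]/(F i e x) hx r1 invg1' mulg1'; done.
  split.
    split=> //; exists (fv (~~ e) x \* u1); by rewrite Hh hmu hu1.
  rewrite /D /= hmu -hu1 -Hh !preh_h -hu !preh_h dst_neg eu edge_neg hj.
  by rewrite preh_h !gmulA -Rel mulgK'.
- split.
    split; first by exists (fv (~~ e) x).
    by rewrite /= /d; split=> //; split=> //; exists (ginv (fv e x) \* u).
  rewrite /D /= hmu hr -hu !preh_h; fold d; rewrite hj.
  rewrite (homV (hj d)) gmulA Rel; gnorm; done.
Qed.

Lemma syll c v p : Good c p -> Good c (h c v \* p.1, p.2) /\ D c (h c v \* p.1, p.2) = jV c v \* D c p.
Proof.
case: p => w0 l [[u hu] Gl]; split; first by split=> //; exists (v \* u); rewrite Hh hu.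
rewrite /= in hu Gl; by rewrite /D /= -hu -Hh !preh_h hj gmulA.
Qed.

Lemma edge_lt i e : i != ord_max -> edge i e = gone.
Proof. by rewrite /edge => /negPf ->. Qed.

Lemma inord_lt_ne (m : nat) : (m < n)%N -> (inord m : I) != ord_max.
Proof.
move=> lt; apply/eqP => /(congr1 val); rewrite /= (inordK (ltnW lt)) => e.
by move: lt; rewrite e ltnn.
Qed.
Lemma succ_inord' (m : nat) : (m < n)%N -> succ (inord m : I) = inord m.+1.
Proof.
move=> lt; apply: val_inj; rewrite succ_lt ?inord_lt_ne //.
by rewrite /= (inordK (ltnW lt)) inordK.
Qed.

Definition GD c (w : Om) := Good c (proj1_sig w).
Definition DD c (w : Om) := D c (proj1_sig w).

Lemma TinvF m : (m <= n)%N -> forall w, GD (inord m) w ->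
  GD ord0 (pf (rhoG (Tinv m)) w) /\ DD ord0 (pf (rhoG (Tinv m)) w) = DD (inord m) w.
Proof.
elim: m => [|m IH] le w Gw /=.
  by rewrite pf_rhoG1; move: Gw; rewrite /GD /DD -[inord 0]/(inord 0 : I) (_ : inord 0 = ord0) //; apply: val_inj; rewrite /= inordK.
rewrite pf_rhoGM pf_rhoGt.
have lt : (m < n)%N by [].
have := @letter (inord m) true (proj1_sig w); rewrite /= succ_inord' // => /(_ Gw) [G1 D1].
have [G2 D2] := IH (ltnW lt) (actO (inord m) true w) G1.
split=> //; rewrite D2 /DD /= D1 edge_lt ?mul1g' //; exact: inord_lt_ne.
Qed.

Lemma TinvB m : (m <= n)%N -> forall w, GD ord0 w ->
  GD (inord m) (pf (rhoG (ginv (Tinv m))) w) /\ DD (inord m) (pf (rhoG (ginv (Tinv m))) w) = DD ord0 w.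
Proof.
elim: m => [|m IH] le w Gw /=.
  rewrite invg1' pf_rhoG1 (_ : inord 0 = ord0); first by split.
  by apply: val_inj; rewrite /= inordK.
have lt : (m < n)%N by [].
rewrite invMg' pf_rhoGM pf_rhoGtV.
have [G1 D1] := IH (ltnW lt) _ Gw.
have := @letter (inord m) false _ G1; rewrite /= succ_inord' // => -[G2 D2].
split=> //; rewrite /DD D2 edge_lt ?mul1g' //; exact: inord_lt_ne.
Qed.

Definition Cl (x : P) := forall w, GD ord0 w ->
  GD ord0 (pf (rhoG (Psi x)) w) /\ DD ord0 (pf (rhoG (Psi x)) w) = x \* DD ord0 w.

Lemma Cl1 : Cl gone.
Proof. by move=> w Gw; rewrite (hom1 Psi_hom) pf_rhoG1 mul1g'. Qed.
Lemma ClM x y : Cl x -> Cl y -> Cl (x \* y).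
Proof.
move=> Cx Cy w Gw; rewrite Psi_hom pf_rhoGM.
have [G1 D1] := Cy w Gw; have [G2 D2] := Cx _ G1.
by split=> //; rewrite D2 D1 gmulA.
Qed.

Lemma inord_n : (inord n : I) = ord_max. Proof. by apply: val_inj; rewrite /= inordK. Qed.
Lemma inord_v (i : I) : (inord i : I) = i. Proof. exact: inord_val. Qed.

Lemma Cl_jV i v : Cl (jV i v).
Proof.
move=> w Gw; rewrite Psi_jV /psiv !pf_rhoGM.
have le : (i <= n)%N by rewrite -ltnS.
have [G1 D1] := TinvB le Gw.
rewrite inord_v in G1 D1.
have [G2 D2] := @syll i v _ G1.
have G2' : GD (inord i) (pf (rhoG (iW (h i v))) (pf (rhoG (ginv (Tinv i))) w)) by rewrite pf_rhoGw inord_v.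
have [G3 D3] := TinvF le G2'.
split=> //; rewrite D3 inord_v /DD pf_rhoGw /=.
by rewrite D2; congr gmul; exact: D1.
Qed.

Lemma Cl_jVinv i v : Cl (ginv (jV i v)).
Proof. by rewrite -(homV (hj i)); apply: Cl_jV. Qed.

Lemma Cl_tP : Cl tP.
Proof.
move=> w Gw; rewrite Psi_tP pf_rhoGM pf_rhoGt.
have := @letter ord_max true (proj1_sig w); rewrite /= succ_max => /(_ Gw) [G1 D1].
have G1' : GD (inord n) (actO ord_max true w) by rewrite inord_n.
have [G2 D2] := TinvF (leqnn n) G1'.
split=> //; rewrite D2 inord_n /DD /= D1 /edge eqxx //.
Qed.

Lemma Cl_tPinv : Cl (ginv tP).
Proof.
move=> w Gw; rewrite (homV Psi_hom) Psi_tP invMg' pf_rhoGM pf_rhoGtV.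
have [G1 D1] := TinvB (leqnn n) Gw.
rewrite inord_n in G1 D1.
have := @letter ord_max false _ G1; rewrite /= succ_max => -[G2 D2].
split=> //; move: D1; rewrite /DD /= => D1; by rewrite D2 D1 /edge eqxx.
Qed.

Lemma claim2 x : Cl x.
Proof.
suff : Cl x /\ Cl (ginv x) by case.
move: x; apply: (cycle_gen HP).
- by rewrite invg1'; split; apply: Cl1.
- move=> x y [Cx Cx'] [Cy Cy']; split; first exact: ClM.
  by rewrite invMg'; apply: ClM.
- by move=> x [Cx Cx']; rewrite invgK'.
- by move=> i v; split; [apply: Cl_jV | apply: Cl_jVinv].
- by split; [apply: Cl_tP | apply: Cl_tPinv].
Qed.

Definition om0 : Om := exist (fun p => nl p.2) (gone, [::]) Logic.I.

Lemma Psi_inj : injective Psi.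
Proof.
move=> x y e.
have G0 : GD ord0 om0 by split=> //; exists gone; rewrite (hom1 (Hh _)).
have D0 : DD ord0 om0 = gone.
  by rewrite /DD /D /= -(hom1 (Hh ord0)) preh_h (hom1 (hj _)) mulg1'.
have [_ Dx] := claim2 x G0; have [_ Dy] := claim2 y G0.
by rewrite -(mulg1' x) -(mulg1' y) -D0 -Dx -Dy e.
Qed.
End Part2.

Theorem lemma3 (n : nat) (V E Vs : Grp) (f g : E -> V) (h : 'I_n.+1 -> V -> Vs)
  (Hf : is_hom f) (Hg : is_hom g) (Hfi : injective f) (Hgi : injective g)
  (Hh : forall i, is_hom (h i)) (Hhi : forall i, injective (h i))
  (H : Grp) (iV : V -> H) (t : H) (HH : is_HNN f g iV t)
  (rho : H -> Zk n) (Hrho : is_hom rho)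
  (Hrho0 : forall v, rho (iV v) = 0%R) (Hrho1 : rho t = Zp1)
  (P : Grp) (jV : 'I_n.+1 -> V -> P) (tP : P) (HP : is_cycle_pi1 f g jV tP)
  (G : Grp) (iW : Vs -> G) (tG : 'I_n.+1 -> G) (HG : is_rose_pi1 f g h iW tG) :
  (exists phi : P -> H,
      [/\ is_hom phi, injective phi &
          forall x : H, rho x = 0%R <-> exists y, phi y = x]) /\
  (exists psi : H -> G,
      (forall x y : H, rho x = 0%R -> rho y = 0%R -> psi (gmul x y) = gmul (psi x) (psi y)) /\
      (forall x y : H, rho x = 0%R -> rho y = 0%R -> psi x = psi y -> x = y)).
Proof.
have P1 := part1 HP HH Hrho Hrho0 Hrho1.
split; first exact: P1.
case: P1 => phi [hphi iphi kphi].
pose Ps := Psi Hh HP HG.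
have hPs : is_hom Ps by apply: Psi_hom.
have iPs : injective Ps by apply: (Psi_inj Hf Hg Hfi Hgi Hhi).
exists (fun x => Ps (pre gone phi x)); split.
- move=> x y /kphi [a <-] /kphi [b <-].
  by rewrite -hphi !pre_inj // hPs.
- move=> x y /kphi [a <-] /kphi [b <-].
  by rewrite !pre_inj // => /iPs ->.
Qed.
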